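(* Let $B$ be a finite skew left brace and let $S$ be a maximal subbrace of $B$. Then either $\zeta(B)\subseteq S$, or $S$ is an ideal of $B$ and $B/S$ is an abelian brace whose group is cyclic of prime order.
   Context: A skew left brace (brace) is a set $B$ with two group structures $(B,+)$ and $(B,\cdot)$ with $a(b+c)=ab-a+ac$; $\lambda_a(b)=-a+ab$. A subbrace is a subset that is a subgroup of both groups; a maximal subbrace is a proper subbrace not contained in any other proper subbrace. An ideal is a subset that is a normal subgroup of both groups and $\lambda_b$-invariant for all $b$. The centre is $\zeta(B)=\{a\in B: a+b=b+a=ab=ba\ \forall b\in B\}$. A brace is abelian if $ab=a+b=b+a$ for all $a,b$. *)

(* Defs.v *)
From mathcomp Require Import all_boot.
Set Implicit Arguments. Unset Strict Implicit. Unset Printing Implicit Defensive.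

Record skew_brace (T : finType) := SkewBrace {
  add : T -> T -> T; opp : T -> T; zero : T;
  mul : T -> T -> T; inv : T -> T; one : T;
  addA : forall a b c, add a (add b c) = add (add a b) c;
  add0r : forall a, add zero a = a;
  addr0 : forall a, add a zero = a;
  addNr : forall a, add (opp a) a = zero;
  addrN : forall a, add a (opp a) = zero;
  mulA : forall a b c, mul a (mul b c) = mul (mul a b) c;
  mul1r : forall a, mul one a = a;
  mulr1 : forall a, mul a one = a;
  mulVr : forall a, mul (inv a) a = one;
  mulrV : forall a, mul a (inv a) = one;
  brace_law : forall a b c, mul a (add b c) = add (mul a b) (add (opp a) (mul a c))
}.

Section BraceDefs.
Variables (T : finType) (B : skew_brace T).
Local Notation "a + b" := (add B a b).
Local Notation "- a" := (opp B a).
Local Notation "a * b" := (mul B a b).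

Definition lambda (a b : T) : T := - a + a * b.

Definition subbrace (S : {set T}) : Prop :=
  [/\ zero B \in S /\ one B \in S,
      (forall a b, a \in S -> b \in S -> a + b \in S),
      (forall a, a \in S -> - a \in S),
      (forall a b, a \in S -> b \in S -> a * b \in S) &
      (forall a, a \in S -> inv B a \in S)].

Definition maximal_subbrace (S : {set T}) : Prop :=
  [/\ subbrace S, S != setT &
      forall S' : {set T}, subbrace S' -> S' != setT -> S \subset S' -> S' = S].

Definition ideal (I : {set T}) : Prop :=
  [/\ subbrace I,
      (forall a b, a \in I -> b + a + - b \in I),
      (forall a b, a \in I -> b * a * inv B b \in I) &
      (forall a b, a \in I -> lambda b a \in I)].

Definition centre : {set T} :=
  [set a | [forall b, [&& a + b == b + a, b + a == a * b & a * b == b * a]]].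

Definition coset (I : {set T}) (a : T) : {set T} := [set a + s | s in I].
Definition quotient_elems (I : {set T}) : {set {set T}} := [set coset I a | a in T].

(* B/I is an abelian brace: for all cosets, ab = a+b = b+a in B/I. *)
Definition quotient_abelian (I : {set T}) : Prop :=
  forall a b, coset I (a * b) = coset I (a + b) /\ coset I (a + b) = coset I (b + a).

(* The group of B/I (additive = multiplicative, as B/I is abelian) is cyclic
   of prime order. *)
Definition quotient_cyclic_prime_order (I : {set T}) : Prop :=
  prime #|quotient_elems I| /\
  exists g : T, forall a : T, exists n : nat, coset I a = coset I (iter n (add B g) (zero B)).

End BraceDefs.

(* Main.v *)
Require Import Defs.
From mathcomp Require Import all_boot.
Import Defs.
Set Implicit Arguments. Unset Strict Implicit. Unset Printing Implicit Defensive.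

Section Aux.
Variables (T : finType) (B : skew_brace T).
Local Notation "a ⊕ b" := (add B a b) (at level 50, left associativity).
Local Notation "a ⊗ b" := (mul B a b) (at level 40, left associativity).
Local Notation "0'" := (zero B).

Lemma addK_l a b c : a ⊕ b = a ⊕ c -> b = c.
Proof.
move=> h; rewrite -(add0r B b) -(add0r B c) -(addNr B a) -!addA.
by rewrite h.
Qed.

Lemma addK_r a b c : b ⊕ a = c ⊕ a -> b = c.
Proof.
move=> h; rewrite -(addr0 B b) -(addr0 B c) -(addrN B a) !addA.
by rewrite h.
Qed.

Lemma opp_uniq x y : x ⊕ y = 0' -> opp B x = y.
Proof.
move=> h; by rewrite -(addr0 B (opp B x)) -h addA addNr add0r.
Qed.

Lemma inv_uniq x y : x ⊗ y = one B -> inv B x = y.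
Proof.
move=> h; by rewrite -(mulr1 B (inv B x)) -h mulA mulVr mul1r.
Qed.

Lemma oppD a b : opp B (a ⊕ b) = opp B b ⊕ opp B a.
Proof.
apply: opp_uniq.
by rewrite -addA (addA B b) addrN add0r addrN.
Qed.

Lemma invM a b : inv B (a ⊗ b) = inv B b ⊗ inv B a.
Proof.
apply: inv_uniq.
by rewrite -mulA (mulA B b) mulrV mul1r mulrV.
Qed.

Lemma zero_one : 0' = one B.
Proof.
have h : one B ⊗ 0' = one B ⊗ 0' ⊕ (opp B (one B) ⊕ one B ⊗ 0').
  by rewrite -brace_law addr0.
have : 0' = opp B (one B) ⊕ one B ⊗ 0'.
  apply: (@addK_l (one B ⊗ 0')). by rewrite addr0 -h.
rewrite mul1r addr0 => e.
by rewrite -(addrN B (one B)) -e addr0.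
Qed.

Definition mulz (n : nat) (w : T) := iter n (add B w) 0'.

Lemma mulzS n w : mulz n.+1 w = w ⊕ mulz n w.
Proof. by []. Qed.

Lemma mulz0 w : mulz 0 w = 0'.
Proof. by []. Qed.

Lemma mulzD m n w : mulz (m + n) w = mulz m w ⊕ mulz n w.
Proof.
elim: m => [|m IH]; first by rewrite add0n mulz0 add0r.
by rewrite addSn !mulzS IH addA.
Qed.

Lemma mulzM n d w : mulz (n * d) w = mulz n (mulz d w).
Proof.
elim: n => [|n IH]; first by rewrite mul0n.
by rewrite mulSn mulzD IH mulzS.
Qed.

Lemma mulz_zero n : mulz n 0' = 0'.
Proof. elim: n => [|n IH] //. by rewrite mulzS IH add0r. Qed.

Lemma mulz1 w : mulz 1 w = w.
Proof. by rewrite mulzS mulz0 addr0. Qed.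

Lemma mulz_order w : exists N, 0 < N /\ mulz N w = 0'.
Proof.
have inj : injective (add B w) by move=> x y; apply: addK_l.
exists (order (add B w) 0'); split; first exact: order_gt0.
exact: iter_order.
Qed.

Definition central (w : T) :=
  forall b, w ⊕ b = b ⊕ w /\ w ⊗ b = w ⊕ b /\ b ⊗ w = w ⊕ b.

Lemma central_zero : central 0'.
Proof.
move=> b; rewrite add0r addr0 zero_one mul1r mulr1; split=> //.
Qed.

Lemma centralD w1 w2 : central w1 -> central w2 -> central (w1 ⊕ w2).
Proof.
move=> h1 h2 b.
have e : w1 ⊕ w2 = w1 ⊗ w2 by case: (h1 w2) => _ [-> _].
split; first by rewrite -addA (proj1 (h2 b)) addA (proj1 (h1 b)) -addA.
split; rewrite {1}e.
  by rewrite -mulA (proj1 (proj2 (h2 b))) (proj1 (proj2 (h1 (w2 ⊕ b)))) addA.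
rewrite mulA (proj2 (proj2 (h1 b))) -(proj1 (proj2 (h1 b))) -mulA.
by rewrite (proj2 (proj2 (h2 b))) (proj1 (proj2 (h1 (w2 ⊕ b)))) addA.
Qed.

Lemma central_mulz n w : central w -> central (mulz n w).
Proof.
move=> hw; elim: n => [|n IH]; first exact: central_zero.
by rewrite mulzS; apply: centralD.
Qed.

Lemma centre_central z : z \in centre B -> central z.
Proof.
rewrite inE => /forallP h b; have := h b => /and3P[/eqP e1 /eqP e2 /eqP e3].
by split=> //; split; rewrite -?e3 -e2 e1.
Qed.

Lemma mulz_opp w n : exists m, opp B (mulz n w) = mulz m w.
Proof.
have [N [N0 hN]] := mulz_order w.
case: N N0 hN => // N _ hN.
exists (n * N); apply: opp_uniq.
by rewrite -mulzD -mulnS mulzM hN mulz_zero.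
Qed.

Lemma mulz_inv w n : central w -> exists m, inv B (mulz n w) = mulz m w.
Proof.
move=> hw; have [m hm] := mulz_opp w n.
exists m; apply: inv_uniq.
have := central_mulz n hw (mulz m w) => [[_ [-> _]]].
by rewrite -hm addrN zero_one.
Qed.


Lemma add_form w n k s t : central w ->
  (mulz n w ⊕ s) ⊕ (mulz k w ⊕ t) = mulz (n + k) w ⊕ (s ⊕ t).
Proof.
move=> hw; have cm n' b := central_mulz n' hw b.
rewrite mulzD -!addA; congr (_ ⊕ _).
by rewrite !addA (proj1 (cm k s)).
Qed.

Lemma mul_form w n k s t : central w ->
  (mulz n w ⊕ s) ⊗ (mulz k w ⊕ t) = mulz (n + k) w ⊕ (s ⊗ t).
Proof.
move=> hw; have cm n' b := central_mulz n' hw b.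
rewrite -(proj1 (proj2 (cm n s))) -(proj1 (proj2 (cm k t))).
rewrite -mulA (mulA B s) (proj2 (proj2 (cm k s))) -(proj1 (proj2 (cm k s))).
rewrite -mulA mulA (proj1 (proj2 (cm n _))) -mulzD.
by rewrite (proj1 (proj2 (cm _ _))).
Qed.

Lemma conj_add w x y : central w -> (w ⊕ x) ⊕ y ⊕ opp B (w ⊕ x) = x ⊕ y ⊕ opp B x.
Proof.
move=> hw; rewrite (proj1 (hw x)) oppD -(addA B x w y) (proj1 (hw y)).
by rewrite !addA -(addA B (x ⊕ y) w) addrN addr0.
Qed.

Lemma conj_mul w x y : central w -> (w ⊗ x) ⊗ y ⊗ inv B (w ⊗ x) = x ⊗ y ⊗ inv B x.
Proof.
move=> hw.
have c b : w ⊗ b = b ⊗ w by rewrite (proj1 (proj2 (hw b))) (proj2 (proj2 (hw b))).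
rewrite (c x) invM -(mulA B x w y) (c y).
by rewrite !mulA -(mulA B (x ⊗ y) w) mulrV mulr1.
Qed.

Lemma lambda_central w x a : central w -> lambda B (w ⊕ x) a = lambda B x a.
Proof.
move=> hw; rewrite /lambda -{2}(proj1 (proj2 (hw x))) -mulA (proj1 (proj2 (hw _))).
by rewrite oppD -addA (addA B (opp B w)) addNr add0r.
Qed.

Variable S : {set T}.
Hypothesis HS : subbrace B S.

Lemma S0 : 0' \in S. Proof. by case: HS => [[h _] _ _ _ _]. Qed.
Lemma SD a b : a \in S -> b \in S -> a ⊕ b \in S. Proof. by case: HS => _ h _ _ _; apply: h. Qed.
Lemma SN a : a \in S -> opp B a \in S. Proof. by case: HS => _ _ h _ _; apply: h. Qed.
Lemma SM a b : a \in S -> b \in S -> a ⊗ b \in S. Proof. by case: HS => _ _ _ h _; apply: h. Qed.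
Lemma SV a : a \in S -> inv B a \in S. Proof. by case: HS => _ _ _ _ h; apply: h. Qed.

Lemma S_mulz n x : x \in S -> mulz n x \in S.
Proof. move=> hx; elim: n => [|n IH]; [exact: S0| exact: SD]. Qed.

Lemma ext_subbrace w : central w -> exists Sw : {set T}, subbrace B Sw /\
  (forall x, x \in Sw <-> exists n s, s \in S /\ x = mulz n w ⊕ s).
Proof.
move=> hw.
have [N [N0 hN]] := mulz_order w.
have red n : mulz n w = mulz (n %% N) w.
  by rewrite {1}(divn_eq n N) mulzD mulzM hN mulz_zero add0r.
pose Sw := [set x | [exists n : 'I_N, exists s : T, (s \in S) && (x == mulz n w ⊕ s)]].
have memS x : x \in Sw <-> exists n s, s \in S /\ x = mulz n w ⊕ s.
  rewrite inE; split.
    by case/existsP=> n /existsP[s /andP[hs /eqP ->]]; exists n, s.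
  case=> n [s [hs ->]]; apply/existsP; exists (Ordinal (ltn_pmod n N0)).
  by apply/existsP; exists s; rewrite hs /= red eqxx.
exists Sw; split=> //.
have cm n b := central_mulz n hw b.
split.
- split; apply/memS; exists 0, 0'; rewrite S0 mulz0 add0r ?zero_one //.
- move=> a b /memS[n [s [hs ->]]] /memS[k [t [ht ->]]]; apply/memS.
  exists (n + k), (s ⊕ t); split; first exact: SD.
  rewrite mulzD -!addA; congr (_ ⊕ _).
  by rewrite !addA (proj1 (cm k s)).
- move=> a /memS[n [s [hs ->]]]; apply/memS.
  have [m hm] := mulz_opp w n.
  exists m, (opp B s); split; first exact: SN.
  by rewrite oppD hm (proj1 (cm m _)).
- move=> a b /memS[n [s [hs ->]]] /memS[k [t [ht ->]]]; apply/memS.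
  exists (n + k), (s ⊗ t); split; first exact: SM.
  rewrite -(proj1 (proj2 (cm n s))) -(proj1 (proj2 (cm k t))).
  rewrite -mulA (mulA B s) (proj2 (proj2 (cm k s))) -(proj1 (proj2 (cm k s))).
  rewrite -mulA mulA (proj1 (proj2 (cm n _))) -mulzD.
  by rewrite (proj1 (proj2 (cm _ _))).
- move=> a /memS[n [s [hs ->]]]; apply/memS.
  have [m hm] := mulz_inv n hw.
  exists m, (inv B s); split; first exact: SV.
  by rewrite -(proj1 (proj2 (cm n s))) invM hm (proj2 (proj2 (cm m _))).
Qed.

Lemma coset_shift y u : u \in S -> coset B S (y ⊕ u) = coset B S y.
Proof.
move=> hu; apply/setP=> x; apply/imsetP/imsetP => [[s hs ->]|[s hs ->]].
  by exists (u ⊕ s); [exact: SD | rewrite addA].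
exists (opp B u ⊕ s); first by apply: SD => //; exact: SN.
by rewrite -addA (addA B u) addrN add0r.
Qed.

Lemma coset_eq x y : coset B S x = coset B S y -> exists2 s, s \in S & y = x ⊕ s.
Proof.
move=> h; have : y \in coset B S y by apply/imsetP; exists 0'; rewrite ?S0 ?addr0.
by rewrite -h => /imsetP[s hs ->]; exists s.
Qed.

End Aux.


Theorem theorem4p7 (T : finType) (B : skew_brace T) (S : {set T}) :
  maximal_subbrace B S ->
  centre B \subset S \/
  [/\ ideal B S, quotient_abelian B S & quotient_cyclic_prime_order B S].
Proof.
move=> [HS HST Hmax].
case: (boolP (centre B \subset S)) => [h|h]; first by left.
right.
move/subsetPn: h => [z zc zS].
have cz := centre_central zc.
have cm n b := central_mulz n cz b.
have subS (Sw : {set T}) (w : T) : (forall x, x \in Sw <-> exists n s, s \in S /\ x = add B (mulz B n w) s) ->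
    S \subset Sw.
  move=> mem; apply/subsetP => s hs; apply/mem; exists 0, s; split=> //.
  by rewrite mulz0 add0r.
have [Sz [Szb memSz]] := ext_subbrace HS cz.
have SzT : Sz = setT.
  case: (eqVneq Sz setT) => // ne.
  have e := Hmax Sz Szb ne (subS _ _ memSz).
  have : z \in Sz by apply/memSz; exists 1, (zero B); rewrite mulz1 addr0 (S0 HS).
  by rewrite e (negbTE zS).
have rep b : exists n s, s \in S /\ b = add B (mulz B n z) s.
  by apply/memSz; rewrite SzT inE.
have cosetm n s : s \in S -> coset B S (add B (mulz B n z) s) = coset B S (mulz B n z).
  by move=> hs; apply: coset_shift.
have exP : exists k, (0 < k) && (mulz B k z \in S).
  have [N [N0 hN]] := mulz_order B z.
  by exists N; rewrite N0 hN (S0 HS).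
have [m /andP[m0 mS] minm] := find_ex_minn exP.
have dvd k : mulz B k z \in S -> m %| k.
  move=> hk.
  have e : mulz B k z = add B (mulz B (k %/ m * m) z) (mulz B (k %% m) z).
    by rewrite -mulzD -divn_eq.
  have hr : mulz B (k %% m) z \in S.
    have -> : mulz B (k %% m) z = add B (opp B (mulz B (k %/ m * m) z)) (mulz B k z).
      by rewrite e addA addNr add0r.
    by apply: (SD HS) => //; apply: (SN HS) => //; rewrite mulzM; apply: (S_mulz HS).
  rewrite /dvdn; have [e0|pos] := posnP (k %% m); first by rewrite ?e0.
  have := minm _ (introT andP (conj pos hr)).
  by rewrite leqNgt ltn_pmod.
split.
- split=> //.
  + move=> a b ha; have [n [s [hs ->]]] := rep b.
    rewrite conj_add //; apply: (SD HS); [exact: (SD HS)| exact: (SN HS)].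
  + move=> a b ha; have [n [s [hs ->]]] := rep b.
    rewrite -(proj1 (proj2 (cm n s))) conj_mul //.
    apply: (SM HS) => //; [exact: (SM HS)| exact: (SV HS)].
  + move=> a b ha; have [n [s [hs ->]]] := rep b.
    rewrite lambda_central // /lambda; apply: (SD HS) => //; [exact: (SN HS)|exact: (SM HS)].
- move=> a b.
  have [n [s [hs ->]]] := rep a; have [k [t [ht ->]]] := rep b.
  rewrite mul_form // !add_form // !cosetm //; try (apply: (SD HS) => //); try (apply: (SM HS) => //).
  by rewrite addnC.
- split; last first.
    exists z => a; have [n [s [hs ->]]] := rep a; exists n.
    by rewrite cosetm.
  have red n : coset B S (mulz B n z) = coset B S (mulz B (n %% m) z).
    rewrite {1}(divn_eq n m) addnC mulzD cosetm //.
    by rewrite mulzM; apply: (S_mulz HS).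
  have le_ij (i j : nat) : j < m -> coset B S (mulz B i z) = coset B S (mulz B j z) -> j <= i.
    move=> jm eq; case: (leqP j i) => // ij.
    have [u hu e] := coset_eq HS eq.
    have e2 : mulz B j z = add B (mulz B i z) (mulz B (j - i) z).
      by rewrite -mulzD subnKC // ltnW.
    have : mulz B (j - i) z = u by apply: (@addK_l _ B (mulz B i z)); rewrite -e2.
    move=> e3; have := minm (j - i); rewrite subn_gt0 ij e3 hu /= => /(_ isT).
    move=> le; have : j - i < m by apply: leq_ltn_trans (leq_subr _ _) jm.
    by rewrite ltnNge le.
  have card : #|quotient_elems B S| = m.
    have -> : quotient_elems B S = [set coset B S (mulz B (val i) z) | i : 'I_m].
      apply/setP=> X; apply/imsetP/imsetP.
        case=> a _ ->; have [n [s [hs ->]]] := rep a.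
        exists (Ordinal (ltn_pmod n m0)) => //; by rewrite cosetm // red.
      by case=> i _ ->; exists (mulz B i z).
    rewrite card_imset; first by rewrite ?cardsT ?card_ord.
    move=> i j eq; apply/val_inj/eqP; rewrite eqn_leq.
    by rewrite (le_ij _ _ (ltn_ord i) (esym eq)) (le_ij _ _ (ltn_ord j) eq).
  rewrite card; apply/primeP; split.
    rewrite ltn_neqAle m0 andbT; apply/eqP => m1.
    by move: mS; rewrite -m1 mulz1 (negbTE zS).
  move=> d dm; apply/orP.
  case: (eqVneq d 1) => [e|d1]; first by left. case: (eqVneq d m) => [e|dnm]; first by right.
  exfalso.
  have cd := central_mulz d cz.
  have [Sd [Sdb memSd]] := ext_subbrace HS cd.
  have dnS : mulz B d z \notin S.
    apply/negP => /dvd md; move/eqP: dnm; apply; apply/eqP; by rewrite eqn_dvd dm md.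
  have SdT : Sd = setT.
    case: (eqVneq Sd setT) => // ne.
    have e := Hmax Sd Sdb ne (subS _ _ memSd).
    have : mulz B d z \in Sd.
      by apply/memSd; exists 1, (zero B); rewrite mulz1 addr0 (S0 HS).
    by rewrite e (negbTE dnS).
  have : z \in Sd by rewrite SdT inE.
  case/memSd => n [s [hs ez]].
  case: m m0 mS minm dvd dm d1 dnm red le_ij card => // m' _ mS minm dvd dm d1 dnm _ _ _.
  have key : mulz B ((n * d) * m' + 1) z \in S.
    rewrite mulzD mulz1 {2}ez -mulzM addA -mulzD addnC -mulnS mulzM.
    apply: (SD HS) => //; apply: (S_mulz HS) => //.
  have := dvd _ key.
  have dd : d %| n * d * m' by apply: dvdn_mulr; apply: dvdn_mull.
  move=> h; have : d %| n * d * m' + 1 by apply: dvdn_trans h.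
  by rewrite dvdn_addr // dvdn1 (negbTE d1).
Qed.
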